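(* Let $p=p_n\in(0,1)$ with $f_n:=n p_n\to 0$, and let $G\sim\mathcal{G}(n,p_n)$ with $m$ its number of edges. Let $\phi(\delta)=(1+\delta)\ln(1+\delta)-\delta$ for $\delta\ge 0$, and set $$\delta_n=\phi^{-1}\left(\frac{2\ln 2}{f_n}\right),\qquad C_n=\frac{1}{1+(1+\delta_n)\frac{n-1}{n}f_n}.$$ For $1\le u\le n$ define $$w_n(u)=\sum_{i=n-u}^{n}\binom{i}{i-(n-u)}(1-p_n)^{\binom{i-(n-u)}{2}}\,\mathbb{P}\left(m\ge\frac{n^2}{2u}-\frac{n}{2}\right),$$ and $\mathbb{T}^1(n,p)=\sum_{1\le u\le nC_n}w_n(u)$. Then $\mathbb{T}^1(n,p)$ has at most polynomial growth in $n$.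
   Context: $\mathcal{G}(n,p)$ is the binomial random graph on $n$ vertices in which each of the $\binom{n}{2}$ pairs of vertices is an edge with probability $p$, independently. $\phi$ is increasing on $[0,\infty)$, so $\phi^{-1}$ is well defined. The quantity $w_n(u)$ is the paper's bound on the expected number of nodes with potential $u$ in the best-first branch-and-bound search tree for maximum independent set (potential of a partial solution $S\subseteq\{v_1,\dots,v_i\}$ being $|S|+n-i$). *)

(* Defs.v *)
From HB Require Import structures.
From mathcomp Require Import all_boot all_order all_algebra.
From mathcomp Require Import all_classical all_reals all_analysis.
Set Implicit Arguments. Unset Strict Implicit. Unset Printing Implicit Defensive.
Import Order.TTheory GRing.Theory Num.Theory.
Local Open Scope ring_scope.

Definition is_graph (n : nat) (E : {set {set 'I_n}}) : bool :=
  [forall e in E, #|e| == 2%N].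

Definition Gnp_weight (R : realType) (n : nat) (p : R) (E : {set {set 'I_n}}) : R :=
  p ^+ #|E| * (1 - p) ^+ ('C(n, 2) - #|E|).

Definition prob_edges_ge (R : realType) (n : nat) (p t : R) : R :=
  \sum_(E : {set {set 'I_n}} | is_graph E && (t <= (#|E|)%:R)) Gnp_weight p E.

Definition phi (R : realType) (d : R) : R := (1 + d) * ln (1 + d) - d.

Definition Cn (R : realType) (n : nat) (p delta : R) : R :=
  1 / (1 + (1 + delta) * ((n%:R - 1) / n%:R) * (n%:R * p)).

Definition wn (R : realType) (n : nat) (p : R) (u : nat) : R :=
  \sum_((n - u)%N <= i < n.+1)
     ('C(i, i - (n - u)))%:R * (1 - p) ^+ 'C(i - (n - u), 2)
       * prob_edges_ge n p ((n%:R ^+ 2) / (2 * u%:R) - n%:R / 2).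

Definition T1 (R : realType) (n : nat) (p delta : R) : R :=
  \sum_(1 <= u < n.+1 | u%:R <= n%:R * Cn n p delta) wn n p u.

(* Main.v *)
Require Import Defs.
From HB Require Import structures.
From mathcomp Require Import all_boot all_order all_algebra.
From mathcomp Require Import all_classical all_reals all_analysis.
From mathcomp Require Import lra ring.
Import Order.TTheory GRing.Theory Num.Theory.
Import numFieldNormedType.Exports.
Import numFieldNormedType.Exports.
Local Open Scope ring_scope.

Section S.
Variable R : realType.

Lemma mgf n (p x : R) : \sum_(E : {set {set 'I_n}} | is_graph E) Gnp_weight p E * x ^+ #|E|
  = (1 - p + p * x) ^+ 'C(n,2).
Proof.
set S := [set A : {set 'I_n} | #|A| == 2%N].
have cS : #|S| = 'C(n,2) by rewrite card_draws card_ord.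
have gE : forall E, is_graph E = (E \subset S).
  move=> E; rewrite /is_graph; apply/idP/idP.
    move/forall_inP => H; apply/fintype.subsetP => e eE; by rewrite inE H.
  move/fintype.subsetP => H; apply/forall_inP => e eE; by move: (H e eE); rewrite inE.
rewrite (partition_big (fun E : {set {set 'I_n}} => inord #|E| : 'I_('C(n,2)).+1) xpredT) //=.
rewrite exprDn; apply: eq_bigr => k _.
transitivity (\sum_(E in [set F : {set {set 'I_n}} | (F \subset S) && (#|F| == k)]) (p*x)^+k * (1-p)^+('C(n,2)-k)).
  apply: eq_big => [E|E].
    rewrite inE gE; case sES: (E \subset S) => //=.
    have : (#|E| <= 'C(n,2))%N by rewrite -cS subset_leq_card.
    move=> le; apply/eqP/eqP => [<-|H]; first by rewrite inordK.
    by apply: val_inj; rewrite /= H inordK.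
  move=> /andP[gr /eqP <-].
  have : (#|E| <= 'C(n,2))%N by rewrite -cS subset_leq_card // -gE.
  move=> le; rewrite inordK ?ltnS //.
  by rewrite /Gnp_weight exprMn mulrAC.
by rewrite sumr_const cards_draws cS mulrC.
Qed.

Lemma chernoff n (p d t : R) : 0 < p < 1 -> 0 <= d -> (1+d)*('C(n,2)%:R * p) <= t ->
  prob_edges_ge n p t <= expR (- ('C(n,2)%:R * p) * phi d).
Proof.
move=> /andP[p0 p1] d0 ht.
set N := 'C(n,2).
have x1 : 1 <= 1 + d by rewrite lerDl.
have x0 : 0 < 1 + d by apply: lt_le_trans x1.
have lx : 0 <= ln (1 + d) by apply: ln_ge0.
have wge0 : forall E : {set {set 'I_n}}, 0 <= Gnp_weight p E.
  move=> E; rewrite /Gnp_weight mulr_ge0 // exprn_ge0 //; lra.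
rewrite /prob_edges_ge.
apply: (@le_trans _ _ (\sum_(E : {set {set 'I_n}} | is_graph E && (t <= (#|E|)%:R))
   Gnp_weight p E * ((1 + d) ^+ #|E| * expR (- t * ln (1 + d))))).
  apply: ler_sum => E /andP[_ tE].
  rewrite -[X in X <= _]mulr1 ler_wpM2l //.
  rewrite -{1}(lnK x0) -expRM_natl -expRD.
  apply: le_trans (expR_ge1Dx _); rewrite lerDl.
  by rewrite mulNr -mulrBl mulr_ge0 // subr_ge0.
apply: (@le_trans _ _ (\sum_(E : {set {set 'I_n}} | is_graph E)
   Gnp_weight p E * ((1 + d) ^+ #|E| * expR (- t * ln (1 + d))))).
  rewrite big_mkcond [X in _ <= X]big_mkcond; apply: ler_sum => E _.
  case: (is_graph E) => //=; case: (t <= _) => //.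
  by rewrite mulr_ge0 // mulr_ge0 // ?exprn_ge0 ?expR_ge0 //; lra.
under eq_bigr => E _ do rewrite mulrA.
rewrite -mulr_suml mgf.
have hb : 1 - p + p * (1 + d) <= expR (p * d) by
  apply: le_trans (expR_ge1Dx _); lra.
apply: (@le_trans _ _ (expR (p * d) ^+ N * expR (- t * ln (1 + d)))).
  rewrite ler_wpM2r ?expR_ge0 // lerXn2r // nnegrE; [nra| exact: expR_ge0].
rewrite -expRM_natl -expRD ler_expR /phi.
have hN : 0 <= N%:R * p :> R by rewrite mulr_ge0 //; lra.
nra.
Qed.

Lemma bin_le_exp i k : ('C(i,k) <= 2^i)%N.
Proof.
elim: i k => [|i IH] [|k] //; first by rewrite bin0 expn_gt0.
by rewrite binS expnS mul2n -addnn leq_add.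
Qed.

Lemma twoN n : (2 * 'C(n,2) = n * (n - 1))%N.
Proof. by rewrite (mul_bin_left n 1) bin1 mulnC. Qed.

End S.

Local Open Scope classical_set_scope.
Local Open Scope ring_scope.
Theorem proposition1 (R : realType) (p delta : nat -> R)
  (hp : forall n, 0 < p n < 1)
  (hf : (fun n : nat => n%:R * p n) @ \oo --> (0 : R))
  (hdelta0 : forall n, 0 <= delta n)
  (hdelta : forall n, phi (delta n) = 2 * ln 2 / (n%:R * p n)) :
  exists (K : R) (c : nat) (N : nat),
    forall n : nat, (N <= n)%N -> T1 n (p n) (delta n) <= K * n%:R ^+ c.
Proof.
exists 4, 2%N, 1%N => n n1.
have [p0 p1] := andP (hp n).
have d0 := hdelta0 n.
set q := p n in p0 p1 *; set d := delta n in d0 *.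
have nr1 : 1 <= n%:R :> R by rewrite ler1n.
have N2 : 2 * ('C(n,2))%:R = n%:R * (n%:R - 1) :> R.
  by rewrite -(natrB _ n1) -natrM twoN natrM.
have key : forall u, (1 <= u)%N -> (u <= n)%N -> u%:R <= n%:R * Cn n q d ->
    wn n q u <= (n.+1)%:R * 2.
  move=> u u1 un hc.
  have ur1 : 1 <= u%:R :> R by rewrite ler1n.
  have urn : u%:R <= n%:R :> R by rewrite ler_nat.
  pose t : R := (n%:R ^+ 2) / (2 * u%:R) - n%:R / 2.
  pose D := 1 + (1 + d) * (n%:R - 1) * q.
  have D0 : 0 < D.
    rewrite /D; have : 0 <= (1 + d) * (n%:R - 1) * q.
      by rewrite !mulr_ge0 //; lra.
    lra.
  have hc' : u%:R * D <= n%:R.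
    move: hc; rewrite /Cn.
    rewrite -mulrA.
    have -> : (n%:R - 1) / n%:R * (n%:R * q) = (n%:R - 1) * q.
      field; apply/eqP; lra.
    rewrite (mulrA (1 + d)) -/D mul1r ler_pdivlMr //.
  have ht : (1 + d) * (('C(n,2))%:R * q) <= t.
    have -> : t = (1 + d) * (('C(n,2))%:R * q) + n%:R / (2 * u%:R) * (n%:R - u%:R * D).
      rewrite /t /D; apply: (mulIf (x := 2 * u%:R)).
        apply/eqP; lra.
      have e : ('C(n,2))%:R = n%:R * (n%:R - 1) / 2 :> R by rewrite -N2; field.
      rewrite e; field; apply/eqP; lra.
    rewrite lerDl mulr_ge0 // ?subr_ge0 //.
  have hP := @chernoff R n q d t (hp n) d0 ht.
  have P0 : 0 <= prob_edges_ge n q t.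
    rewrite /prob_edges_ge sumr_ge0 // => E _.
    rewrite /Gnp_weight mulr_ge0 // exprn_ge0 //; lra.
  have hexp : (('C(n,2))%:R * q) * phi d = (n%:R - 1) * ln 2.
    rewrite /d hdelta -/q.
    have e : ('C(n,2))%:R = n%:R * (n%:R - 1) / 2 :> R by rewrite -N2; field.
    rewrite e; field; apply/andP; split; apply/eqP; lra.
  have h2 : 2 ^+ n * prob_edges_ge n q t <= 2.
    apply: (le_trans (ler_wpM2l _ hP)); first exact: exprn_ge0.
    have l2 : (0:R) < 2 by [].
    rewrite mulNr hexp -{1}(lnK l2) -expRM_natl -expRD.
    have -> : n%:R * ln 2 - (n%:R - 1) * ln 2 = ln (2:R) by ring.
    by rewrite lnK.
  rewrite /wn.
  apply: (le_trans (y := \sum_((n - u)%N <= i < n.+1) 2 ^+ n * prob_edges_ge n q t)).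
    apply: ler_sum_nat => i /andP[_ hi].
    apply: ler_wpM2r => //.
    rewrite -[X in _ <= X]mulr1; apply: ler_pM.
    - exact: ler0n.
    - apply: exprn_ge0; lra.
    - rewrite -natrX ler_nat; apply: leq_trans (bin_le_exp _ _) _.
      by apply: leq_pexp2l.
    - apply: exprn_ile1; lra.
  rewrite sumr_const_nat -(mulr_natl _ (n.+1 - (n - u))); apply: ler_pM => //.
  - by apply: mulr_ge0 => //; apply: exprn_ge0.
  - by rewrite ler_nat leq_subr.
rewrite /T1.
apply: (le_trans (y := \sum_(1 <= u < n.+1) ((n.+1)%:R * 2 : R))).
  rewrite big_mkcond /=; apply: ler_sum_nat => u /andP[u1 un].
  case: ifP => hc; first by apply: key => //; rewrite -ltnS.
  by apply: mulr_ge0.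
rewrite sumr_const_nat subn1 /= -(mulr_natl _ n).
have -> : (n.+1)%:R = n%:R + 1 :> R by rewrite -addn1 natrD.
nra.
Qed.
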